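(* Let $A=(S,\delta,s_0,F)$ be a $\mathbf{JSL}$-dfa over $\Sigma$. Then: (1) for every $s\in S$, the language accepted by the state $s$ in $A^{\mathsf{op}}$ is $\{w\in\Sigma^*: \delta_{w^r}(s_0)\not\le_S s\}$; (2) if $A$ accepts $L$, then $A^{\mathsf{op}}$ accepts $L^r=\{w^r: w\in L\}$; (3) $[\mathrm{reach}(A)]^{\mathsf{op}}\cong\mathrm{simple}(A^{\mathsf{op}})$ as $\mathbf{JSL}$-dfas; in particular $A$ is reachable if and only if $A^{\mathsf{op}}$ is simple.
   Context: Finite semilattices have joins of all finite subsets; their morphisms preserve finite joins. A $\mathbf{JSL}$-dfa $A=(S,\delta,s_0,F)$: a finite semilattice $S$, semilattice morphisms $\delta_a\colon S\to S$ ($a\in\Sigma$), initial state $s_0$, final states $F=\{s:s\not\le s_f\}$ for some $s_f\in S$. Write $\delta_w=\delta_{a_n}\circ\cdots\circ\delta_{a_1}$ for $w=a_1\cdots a_n$, and $w^r=a_n\cdots a_1$. The language accepted by a state $s$ is $L(A,s)=\{w:\delta_w(s)\in F\}$, and $A$ accepts $L(A,s_0)$. Morphisms of $\mathbf{JSL}$-dfas are semilattice morphisms preserving transitions, initial state and final states (both ways). The dual $A^{\mathsf{op}}$ has states $S^{\mathsf{op}}$ (reversed order), transitions $\delta^*_a(s)=$ the $\le_S$-largest $t$ with $\delta_a(t)\le_S s$, initial state the $\le_S$-largest non-final state of $A$, and final states $\{s: s_0\not\le_S s\}$. $A$ is reachable if every state is a finite join of states $\delta_w(s_0)$; $\mathrm{reach}(A)$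 is the sub-$\mathbf{JSL}$-dfa on the set of all such finite joins. $A$ is simple if distinct states accept distinct languages; $\mathrm{simple}(A)$ is the $\mathbf{JSL}$-dfa whose states are the languages $L(A,s)$, $s\in S$, ordered by inclusion (join $=$ union), with transitions $K\mapsto a^{-1}K=\{w:aw\in K\}$, initial state $L(A,s_0)$, and final states the $K$ with $\epsilon\in K$. *)

(* Defs.v *)
From mathcomp Require Import all_boot.
From Stdlib Require Import ClassicalEpsilon.


(* The state set is the subset [jin] of the
   ambient type [jst]; [jjoin] is the binary join, [jbot] the empty join,
   [jdelta a] the transition for letter [a], [jinit] the initial state and
   [jfinal] the set of final states. *)
Record jdfa (Sigma : Type) := JDfa {
  jst : Type;
  jin : jst -> Prop;
  jjoin : jst -> jst -> jst;
  jbot : jst;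
  jdelta : Sigma -> jst -> jst;
  jinit : jst;
  jfinal : jst -> Prop
}.

Arguments jst {Sigma} j.
Arguments jin {Sigma} j _.
Arguments jjoin {Sigma} j _ _.
Arguments jbot {Sigma} j.
Arguments jdelta {Sigma} j _ _.
Arguments jinit {Sigma} j.
Arguments jfinal {Sigma} j _.

Section JDFA.
Context {Sigma : finType}.
Implicit Types A B : jdfa Sigma.

Definition jle A (x y : jst A) : Prop := jjoin A x y = y.

Definition is_jdfa A : Prop :=
  [/\ (exists l : list (jst A), forall x, jin A x -> List.In x l),
      [/\ jin A (jbot A), (forall x y, jin A x -> jin A y -> jin A (jjoin A x y)),
          (forall a x, jin A x -> jin A (jdelta A a x)) & jin A (jinit A)],
      [/\ (forall x y z, jin A x -> jin A y -> jin A z ->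
             jjoin A x (jjoin A y z) = jjoin A (jjoin A x y) z),
          (forall x y, jin A x -> jin A y -> jjoin A x y = jjoin A y x),
          (forall x, jin A x -> jjoin A x x = x) &
          (forall x, jin A x -> jjoin A (jbot A) x = x)],
      (forall a, jdelta A a (jbot A) = jbot A /\
         forall x y, jin A x -> jin A y ->
           jdelta A a (jjoin A x y) = jjoin A (jdelta A a x) (jdelta A a y)) &
      (exists sf, jin A sf /\ forall s, jin A s -> (jfinal A s <-> ~ jle A s sf))].

Definition jdw A (w : seq Sigma) (s : jst A) : jst A :=
  foldl (fun t a => jdelta A a t) s w.

Definition jlang A (s : jst A) : seq Sigma -> Prop :=
  fun w => jfinal A (jdw A w s).
Definition jaccepts A : seq Sigma -> Prop := jlang A (jinit A).

Definition jgreatest A (P : jst A -> Prop) : jst A :=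
  epsilon (inhabits (jbot A))
    (fun t => [/\ jin A t, P t & forall u, jin A u -> P u -> jle A u t]).

(* The dual A^op: reversed order (so join = meet of A, bottom = top of A),
   delta*_a(s) = largest t with delta_a(t) <= s, initial state the largest
   non-final state, final states {s | s_0 not<= s}. *)
Definition jop A : jdfa Sigma :=
  @JDfa Sigma (jst A) (jin A)
    (fun x y => jgreatest A (fun t => jle A t x /\ jle A t y))
    (jgreatest A (fun _ => True))
    (fun a s => jgreatest A (fun t => jle A (jdelta A a t) s))
    (jgreatest A (fun t => ~ jfinal A t))
    (fun s => ~ jle A (jinit A) s).

Definition jbigjoin A (l : seq (jst A)) : jst A := foldr (jjoin A) (jbot A) l.

Definition jreachable_state A (s : jst A) : Prop :=
  exists ws : seq (seq Sigma), s = jbigjoin A (map (fun w => jdw A w (jinit A)) ws).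

Definition jreachable A : Prop := forall s, jin A s -> jreachable_state A s.

Definition jreach A : jdfa Sigma :=
  @JDfa Sigma (jst A) (fun s => jin A s /\ jreachable_state A s)
    (jjoin A) (jbot A) (jdelta A) (jinit A) (jfinal A).

Definition jsimple A : Prop :=
  forall s t, jin A s -> jin A t -> (forall w, jlang A s w <-> jlang A t w) -> s = t.

(* simple(A): states are the languages L(A,s), ordered by inclusion
   (join = union), transitions K |-> a^{-1}K, final iff epsilon in K *)
Definition jsimplify A : jdfa Sigma :=
  @JDfa Sigma (seq Sigma -> Prop)
    (fun K => exists s, jin A s /\ K = jlang A s)
    (fun K1 K2 w => K1 w \/ K2 w)
    (fun _ => False)
    (fun a K w => K (a :: w))
    (jlang A (jinit A))
    (fun K => K [::]).

Definition jmorph A B (f : jst A -> jst B) : Prop :=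
  [/\ (forall x, jin A x -> jin B (f x)),
      (forall x y, jin A x -> jin A y -> f (jjoin A x y) = jjoin B (f x) (f y)),
      f (jbot A) = jbot B,
      (forall a x, jin A x -> f (jdelta A a x) = jdelta B a (f x)) &
      f (jinit A) = jinit B /\ (forall x, jin A x -> (jfinal B (f x) <-> jfinal A x))].

Definition jiso A B : Prop :=
  exists (f : jst A -> jst B) (g : jst B -> jst A),
    [/\ jmorph A B f, jmorph B A g, (forall x, jin A x -> g (f x) = x) &
        (forall y, jin B y -> f (g y) = y)].

End JDFA.

(* Main.v *)
Require Import Defs.
From mathcomp Require Import all_boot.
From Stdlib Require Import Classical ClassicalEpsilon FunctionalExtensionality PropExtensionality.
Set Implicit Arguments.
Unset Strict Implicit.

Lemma jgreatest_gen (Sigma : finType) (B : jdfa Sigma) (P : jst B -> Prop) t :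
  jin B t -> P t -> (forall u, jin B u -> P u -> jle B u t) ->
  [/\ jin B (jgreatest B P), P (jgreatest B P) &
      forall u, jin B u -> P u -> jle B u (jgreatest B P)].
Proof.
move=> H1 H2 H3; rewrite /jgreatest.
by apply: (epsilon_spec (inhabits (jbot B))
  (fun t => [/\ jin B t, P t & forall u, jin B u -> P u -> jle B u t])); exists t.
Qed.

Lemma morph_inv (Sigma : finType) (B C : jdfa Sigma) f g :
  jmorph B C f -> (forall y, jin C y -> jin B (g y)) ->
  (forall x, jin B x -> g (f x) = x) -> (forall y, jin C y -> f (g y) = y) ->
  jin B (jbot B) -> (forall x y, jin B x -> jin B y -> jin B (jjoin B x y)) ->
  (forall a x, jin B x -> jin B (jdelta B a x)) -> jin B (jinit B) ->
  jmorph C B g.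
Proof.
case=> fin fJ fb fD [fi ff] gin gf fg cb cJ cD ci.
split => //.
- move=> x y Hx Hy.
  have -> : jjoin C x y = f (jjoin B (g x) (g y)).
    by rewrite fJ; [rewrite !fg | apply: gin | apply: gin].
  by rewrite gf //; apply: cJ; apply: gin.
- by rewrite -fb gf.
- move=> a x Hx.
  have -> : jdelta C a x = f (jdelta B a (g x)).
    by rewrite fD; [rewrite fg | apply: gin].
  by rewrite gf //; apply: cD; apply: gin.
- split; first by rewrite -fi gf.
  move=> y Hy; have := ff (g y) (gin _ Hy); rewrite fg //.
  by move=> H; split => /H.
Qed.

Section Main.
Variable Sigma : finType.
Variable A : jdfa Sigma.
Hypothesis HA : is_jdfa A.

Local Notation IN := (jin A).
Local Notation J := (jjoin A).
Local Notation le := (jle A).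
Local Notation D := (jdelta A).
Local Notation s0 := (jinit A).
Local Notation bot := (jbot A).
Local Notation R := (jreachable_state A).
Local Notation dw := (jdw A).

Lemma fin_ex : exists l : list (jst A), forall x, IN x -> List.In x l.
Proof. by case: HA => [Hf [Hb HJ HD Hi] [Ha Hc Hid Hbot] Hdl Hsf]. Qed.
Lemma inbot : IN bot. Proof. by case: HA => [Hf [Hb HJ HD Hi] [Ha Hc Hid Hbot] Hdl Hsf]. Qed.
Lemma inJ x y : IN x -> IN y -> IN (J x y). Proof. case: HA => [Hf [Hb HJ HD Hi] [Ha Hc Hid Hbot] Hdl Hsf]; exact: HJ. Qed.
Lemma inD a x : IN x -> IN (D a x). Proof. case: HA => [Hf [Hb HJ HD Hi] [Ha Hc Hid Hbot] Hdl Hsf]; exact: HD. Qed.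
Lemma ininit : IN s0. Proof. by case: HA => [Hf [Hb HJ HD Hi] [Ha Hc Hid Hbot] Hdl Hsf]. Qed.
Lemma jA x y z : IN x -> IN y -> IN z -> J x (J y z) = J (J x y) z.
Proof. case: HA => [Hf [Hb HJ HD Hi] [Ha Hc Hid Hbot] Hdl Hsf]; exact: Ha. Qed.
Lemma jC x y : IN x -> IN y -> J x y = J y x.
Proof. case: HA => [Hf [Hb HJ HD Hi] [Ha Hc Hid Hbot] Hdl Hsf]; exact: Hc. Qed.
Lemma jI x : IN x -> J x x = x.
Proof. case: HA => [Hf [Hb HJ HD Hi] [Ha Hc Hid Hbot] Hdl Hsf]; exact: Hid. Qed.
Lemma jB x : IN x -> J bot x = x.
Proof. case: HA => [Hf [Hb HJ HD Hi] [Ha Hc Hid Hbot] Hdl Hsf]; exact: Hbot. Qed.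
Lemma Dbot a : D a bot = bot. Proof. case: HA => [Hf [Hb HJ HD Hi] [Ha Hc Hid Hbot] Hdl Hsf]; by case: (Hdl a). Qed.
Lemma DJ a x y : IN x -> IN y -> D a (J x y) = J (D a x) (D a y).
Proof. case: HA => [Hf [Hb HJ HD Hi] [Ha Hc Hid Hbot] Hdl Hsf]; by case: (Hdl a) => _ H'; apply: H'. Qed.
Lemma sf_ex : exists sf, IN sf /\ forall s, IN s -> (~ jfinal A s <-> le s sf).
Proof.
case: HA => [Hf [Hb HJ HD Hi] [Ha Hc Hid Hbot] Hdl Hsf]; case: Hsf => sf [Hs H]; exists sf; split => // s Hs'.
rewrite H //; split; [exact: NNPP | tauto].
Qed.

Lemma le_refl x : IN x -> le x x. Proof. exact: jI. Qed.
Lemma le_trans x y z : IN x -> IN y -> IN z -> le x y -> le y z -> le x z.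
Proof. rewrite /jle => Hx Hy Hz H1 H2. by rewrite -H2 jA // H1. Qed.
Lemma le_anti x y : IN x -> IN y -> le x y -> le y x -> x = y.
Proof. rewrite /jle => Hx Hy H1 H2. by rewrite -H1 jC. Qed.
Lemma le_joinl x y : IN x -> IN y -> le x (J x y).
Proof. rewrite /jle => Hx Hy. by rewrite jA ?jI. Qed.
Lemma le_joinr x y : IN x -> IN y -> le y (J x y).
Proof. move=> Hx Hy; rewrite jC //; exact: le_joinl. Qed.
Lemma join_lub x y z : IN x -> IN y -> IN z -> le x z -> le y z -> le (J x y) z.
Proof. rewrite /jle => Hx Hy Hz H1 H2. by rewrite -jA ?H2. Qed.
Lemma bot_le x : IN x -> le bot x. Proof. exact: jB. Qed.
Lemma D_mono a x y : IN x -> IN y -> le x y -> le (D a x) (D a y).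
Proof. rewrite /jle => Hx Hy H. by rewrite -DJ ?H. Qed.

Lemma greatest_ex (P : jst A -> Prop) :
  (forall x, P x -> IN x) -> P bot -> (forall x y, P x -> P y -> P (J x y)) ->
  exists t, P t /\ forall u, P u -> le u t.
Proof.
move=> PI Pb PJ; have [l Hl] := fin_ex.
have H : forall l', exists t, P t /\ forall u, List.In u l' -> P u -> le u t.
  elim=> [|x l' [t [Pt Ht]]]; first by exists bot.
  case: (classic (P x)) => Px.
    exists (J x t); split; first exact: PJ.
    move=> u [<- _|Hu Pu]; first exact: le_joinl (PI _ Px) (PI _ Pt).
    apply: (@le_trans u t (J x t)); auto; last exact: le_joinr (PI _ Px) (PI _ Pt).
  exists t; split => // u [<- //|Hu Pu]; auto.
have [t [Pt Ht]] := H l; exists t; split => // u Pu; apply: Ht => //.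
exact: Hl (PI _ Pu).
Qed.

Lemma jgreatest_A (P : jst A -> Prop) :
  (forall x, P x -> IN x) -> P bot -> (forall x y, P x -> P y -> P (J x y)) ->
  [/\ IN (jgreatest A P), P (jgreatest A P) &
      forall u, P u -> le u (jgreatest A P)].
Proof.
move=> PI Pb PJ; have [t [Pt Ht]] := @greatest_ex P PI Pb PJ.
have [] := @jgreatest_gen _ A P t (PI _ Pt) Pt (fun u _ Pu => Ht u Pu).
move=> H1 H2 H3; split => // u Pu; exact: H3 (PI _ Pu) Pu.
Qed.

Lemma dw_rcons w a s : dw (rcons w a) s = D a (dw w s).
Proof. by rewrite /jdw foldl_rcons. Qed.

Lemma in_dw w s : IN s -> IN (dw w s).
Proof. elim: w s => [|a w IH] s Hs //=; apply: IH; exact: inD. Qed.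

Lemma R_in s : R s -> IN s.
Proof.
case=> ws ->; elim: ws => [|w ws IH] /=; first exact: inbot.
apply: inJ => //; apply: in_dw; exact: ininit.
Qed.

Lemma bigjoin_cat l1 l2 : (forall x, List.In x (l1 ++ l2) -> IN x) ->
  jbigjoin A (l1 ++ l2) = J (jbigjoin A l1) (jbigjoin A l2).
Proof.
have Hin : forall l, (forall x, List.In x l -> IN x) -> IN (jbigjoin A l).
  elim=> [|x l IH] H /=; first exact: inbot.
  apply: inJ; [apply: H; left | apply: IH => y Hy; apply: H; right] => //.
elim: l1 => [|x l1 IH] H /=; first by rewrite jB //; apply: Hin.
rewrite IH; last by move=> y Hy; apply: H; right.
rewrite jA //; first (by apply: H; left); apply: Hin => y Hy; apply: H; right;
  apply/List.in_or_app; tauto.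
Qed.

Lemma in_map_dw ws x : List.In x (map (fun w => dw w s0) ws) -> IN x.
Proof.
elim: ws => [|w ws IH] //= [<-|H]; last exact: IH.
apply: in_dw; exact: ininit.
Qed.

Lemma R_join x y : R x -> R y -> R (J x y).
Proof.
case=> ws1 -> [ws2 ->]; exists (ws1 ++ ws2).
rewrite map_cat bigjoin_cat // -map_cat; exact: in_map_dw.
Qed.

Lemma R_bot : R bot. Proof. by exists [::]. Qed.

Lemma R_dw v : R (dw v s0).
Proof.
exists [:: v] => /=; rewrite jC ?jB //; try exact: inbot;
  apply: in_dw; exact: ininit.
Qed.

Lemma R_D a x : R x -> R (D a x).
Proof.
case=> ws ->; exists (map (fun w => rcons w a) ws).
elim: ws => [|w ws IH] /=; first exact: Dbot.
rewrite DJ; last (by apply: R_in; exists ws); last (by apply: in_dw; exact: ininit).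
by rewrite IH dw_rcons.
Qed.

Lemma R_below x y : R x -> IN y -> (forall v, le (dw v s0) x -> le (dw v s0) y) -> le x y.
Proof.
move=> Rx Hy H; have Hx := R_in Rx; case: Rx Hx H => ws -> Hx H.
have Hw : forall w, List.In w ws -> le (dw w s0) (jbigjoin A (map (fun w => dw w s0) ws)).
  elim: ws {Hx H} => [|w' ws IH] //= w [<-|Hw].
    apply: le_joinl; [apply: in_dw; exact: ininit | apply: R_in; by exists ws].
  apply: le_trans (IH _ Hw) _.
  - apply: in_dw; exact: ininit.
  - apply: R_in; by exists ws.
  - apply: inJ; [apply: in_dw; exact: ininit | apply: R_in; by exists ws].
  apply: le_joinr; [apply: in_dw; exact: ininit | apply: R_in; by exists ws].
have : forall w, List.In w ws -> le (dw w s0) y by move=> w Hw'; apply: H; apply: Hw.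
elim: ws {Hx H Hw} => [|w ws IH] /= H'; first exact: bot_le.
apply: join_lub => //.
- apply: in_dw; exact: ininit.
- apply: R_in; by exists ws.
- by apply: H'; left.
- by apply: IH => w' Hw'; apply: H'; right.
Qed.

Lemma ds_spec a s : IN s ->
  IN (jdelta (jop A) a s) /\
  forall t, IN t -> (le t (jdelta (jop A) a s) <-> le (D a t) s).
Proof.
move=> Hs.
have [|||t0 [[Ht0 Ht0s] Hg]] := @greatest_ex (fun t => IN t /\ le (D a t) s).
- by move=> x [].
- split; [exact: inbot | rewrite Dbot; exact: bot_le].
- move=> x y [Hx Hxs] [Hy Hys]; split; first exact: inJ.
  rewrite DJ //; apply: join_lub => //; exact: inD.
have [H1 H2 H3] := @jgreatest_gen _ A (fun t => le (D a t) s) t0 Ht0 Ht0s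
  (fun u Hu Pu => Hg u (conj Hu Pu)).
split => // t Ht; split => [Hle|Hle]; last exact: H3.
apply: le_trans (D_mono a Ht H1 Hle) H2 => //; exact: inD.
Qed.

Lemma op_dw w s : IN s ->
  IN (jdw (jop A) w s) /\
  forall t, IN t -> (le t (jdw (jop A) w s) <-> le (dw (rev w) t) s).
Proof.
elim: w s => [|a w IH] s Hs /=; first by split.
have [Hd Hds] := ds_spec a Hs.
have [H1 H2] := IH _ Hd; split => // t Ht.
rewrite H2 // rev_cons dw_rcons; apply: Hds; exact: in_dw.
Qed.

Lemma Lchar s w : IN s -> (jlang (jop A) s w <-> ~ le (dw (rev w) s0) s).
Proof.
move=> Hs; rewrite /jlang /=; have [_ H] := op_dw w Hs.
rewrite H //; exact: ininit.
Qed.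

Lemma M_char : IN (jinit (jop A)) /\
  forall u, IN u -> (le u (jinit (jop A)) <-> ~ jfinal A u).
Proof.
have [sf [Hsf Hnf]] := sf_ex.
have Hsf' : ~ jfinal A sf by rewrite Hnf //; exact: le_refl.
have [H1 H2 H3] := @jgreatest_gen _ A (fun t => ~ jfinal A t) sf Hsf Hsf'
  (fun u Hu Pu => proj1 (Hnf u Hu) Pu).
split => // u Hu; split => [Hle|]; last exact: H3.
rewrite Hnf //; apply: le_trans Hle _ => //; by rewrite -Hnf.
Qed.

Local Notation Rr := (jreach A).

Lemma Rmeet x y : IN x -> IN y ->
  let m := jjoin (jop Rr) x y in
  IN m /\ R m /\ forall u, IN u -> R u -> (le u m <-> le u x /\ le u y).
Proof.
move=> Hx Hy /=.
have [|||t [[[Ht Rt] [Htx Hty]] Hg]] := @greatest_ex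
  (fun t => (IN t /\ R t) /\ le t x /\ le t y).
- by move=> z [[]].
- do 2 split; [exact: inbot | exact: R_bot | exact: bot_le | exact: bot_le].
- move=> a b [[Ha Ra] [Hax Hay]] [[Hb Rb] [Hbx Hby]].
  do 2 split; [exact: inJ | exact: R_join | exact: join_lub | exact: join_lub].
have [[H1 R1] [H2x H2y] H3] := @jgreatest_gen _ Rr
  (fun t => jle Rr t x /\ jle Rr t y) t (conj Ht Rt) (conj Htx Hty)
  (fun u Hu Pu => Hg u (conj Hu Pu)).
split; first done; split; first done; move=> u Hu Ru; split => [Hle|Hle]; last exact: H3.
split; [exact: le_trans Hle H2x | exact: le_trans Hle H2y].
Qed.

Lemma Rtop : let T := jbot (jop Rr) in
  IN T /\ R T /\ forall u, IN u -> R u -> le u T.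
Proof.
have [|||t [[[Ht Rt] _] Hg]] := @greatest_ex (fun t => (IN t /\ R t) /\ True).
- by move=> z [[]].
- by do 2 split; [exact: inbot | exact: R_bot].
- move=> a b [[Ha Ra] _] [[Hb Rb] _]; by do 2 split; [exact: inJ | exact: R_join].
have [[H1 R1] _ H3] := @jgreatest_gen _ Rr (fun _ => True) t (conj Ht Rt) I
  (fun u Hu Pu => Hg u (conj Hu Pu)).
split; first done; split; first done; move=> u Hu Ru; exact: H3.
Qed.

Lemma Rds a x : IN x ->
  let d := jdelta (jop Rr) a x in
  IN d /\ R d /\ forall u, IN u -> R u -> (le u d <-> le (D a u) x).
Proof.
move=> Hx /=.
have [|||t [[[Ht Rt] Htx] Hg]] := @greatest_ex
  (fun t => (IN t /\ R t) /\ le (D a t) x).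
- by move=> z [[]].
- split; [split|]; [exact: inbot | exact: R_bot | rewrite Dbot; exact: bot_le].
- move=> u v [[Hu Ru] Hux] [[Hv Rv] Hvx].
  split; [split|]; [exact: inJ | exact: R_join | rewrite DJ //; apply: join_lub => //; exact: inD].
have [[H1 R1] H2 H3] := @jgreatest_gen _ Rr
  (fun t => jle Rr (jdelta Rr a t) x) t (conj Ht Rt) Htx
  (fun u Hu Pu => Hg u (conj Hu Pu)).
split; first done; split; first done; move=> u Hu Ru; split => [Hle|Hle]; last exact: H3.
apply: le_trans (D_mono a Hu H1 Hle) H2 => //; exact: inD.
Qed.

Lemma Rinit : let m := jinit (jop Rr) in
  IN m /\ R m /\ forall u, IN u -> R u -> (le u m <-> ~ jfinal A u).
Proof.
have [sf [Hsf Hnf]] := sf_ex.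
have [|||t [[[Ht Rt] Htf] Hg]] := @greatest_ex
  (fun t => (IN t /\ R t) /\ ~ jfinal A t).
- by move=> z [[]].
- split; [split|]; [exact: inbot | exact: R_bot | rewrite Hnf; [exact: bot_le | exact: inbot]].
- move=> u v [[Hu Ru] Huf] [[Hv Rv] Hvf].
  split; [split|]; [exact: inJ | exact: R_join |].
  rewrite Hnf; last exact: inJ.
  rewrite Hnf // in Huf; rewrite Hnf // in Hvf; exact: join_lub.
have [[H1 R1] H2 H3] := @jgreatest_gen _ Rr
  (fun t => ~ jfinal Rr t) t (conj Ht Rt) Htf
  (fun u Hu Pu => Hg u (conj Hu Pu)).
split; first done; split; first done; move=> u Hu Ru; split => [Hle|Hle]; last exact: H3.
rewrite Hnf //; apply: le_trans Hle _ => //; by rewrite -Hnf.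
Qed.

Lemma f_eq s t : IN s -> IN t ->
  (forall u, IN u -> R u -> (le u s <-> le u t)) ->
  jlang (jop A) s = jlang (jop A) t.
Proof.
move=> Hs Ht H; apply: functional_extensionality => w.
apply: propositional_extensionality; rewrite !Lchar // H //;
  [apply: in_dw; exact: ininit | exact: R_dw].
Qed.

Lemma f_inj x y : R x -> R y -> jlang (jop A) x = jlang (jop A) y -> x = y.
Proof.
move=> Rx Ry E; have Hx := R_in Rx; have Hy := R_in Ry.
have H : forall v, le (dw v s0) x <-> le (dw v s0) y.
  move=> v; have := f_equal (fun K => K (rev v)) E => E'.
  have := Lchar (rev v) Hx; have := Lchar (rev v) Hy; rewrite revK E'.
  move=> H1 H2; split => Hv; apply: NNPP => Hn.
  - exact: (proj1 H2 (proj2 H1 Hn) Hv).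
  - exact: (proj1 H1 (proj2 H2 Hn) Hv).
apply: le_anti => //; apply: R_below => // v; rewrite H //.
Qed.

Lemma below_R s : IN s -> exists r, IN r /\ R r /\
  forall u, IN u -> R u -> (le u r <-> le u s).
Proof.
move=> Hs.
have [|||t [[[Ht Rt] Hts] Hg]] := @greatest_ex
  (fun t => (IN t /\ R t) /\ le t s).
- by move=> z [[]].
- split; [split|]; [exact: inbot | exact: R_bot | exact: bot_le].
- move=> u v [[Hu Ru] Hus] [[Hv Rv] Hvs].
  split; [split|]; [exact: inJ | exact: R_join | exact: join_lub].
exists t; split; first done; split; first done; move=> u Hu Ru; split => [Hle|Hle].
- exact: le_trans Hle Hts.
- by apply: Hg.
Qed.

Definition gmap (K : seq Sigma -> Prop) : jst A :=
  epsilon (inhabits (jbot A)) (fun r => (IN r /\ R r) /\ jlang (jop A) r = K).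

Lemma g_spec K : jin (jsimplify (jop A)) K ->
  (IN (gmap K) /\ R (gmap K)) /\ jlang (jop A) (gmap K) = K.
Proof.
case=> s [Hs ->]; rewrite /gmap.
apply: (epsilon_spec (inhabits (jbot A))
  (fun r => (IN r /\ R r) /\ jlang (jop A) r = jlang (jop A) s)).
have [r [Hr [Rr' Hrs]]] := below_R Hs.
exists r; split => //; exact: f_eq.
Qed.

Lemma part3 : jiso (jop Rr) (jsimplify (jop A)) /\ (jreachable A <-> jsimple (jop A)).
Proof.
pose f := fun x : jst A => jlang (jop A) x.
have fm : jmorph (jop Rr) (jsimplify (jop A)) f.
  split.
  - move=> x [Hx _]; by exists x.
  - move=> x y [Hx Rx] [Hy Ry]; have [Hm [Rm Hmc]] := Rmeet Hx Hy.
    apply: functional_extensionality => w; apply: propositional_extensionality.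
    change (jlang (jop A) (jjoin (jop Rr) x y) w <-> jlang (jop A) x w \/ jlang (jop A) y w).
    rewrite !Lchar // Hmc; try (apply: in_dw; exact: ininit); last exact: R_dw.
    split; [exact: not_and_or | tauto].
  - have [HT [RT HTc]] := Rtop.
    apply: functional_extensionality => w; apply: propositional_extensionality.
    change (jlang (jop A) (jbot (jop Rr)) w <-> False).
    rewrite Lchar //; split => // H; apply: H; apply: HTc;
      [apply: in_dw; exact: ininit | exact: R_dw].
  - move=> a x [Hx Rx]; have [Hd [Rd Hdc]] := Rds a Hx.
    apply: functional_extensionality => w; apply: propositional_extensionality.
    change (jlang (jop A) (jdelta (jop Rr) a x) w <-> jlang (jop A) x (a :: w)).
    rewrite !Lchar // Hdc; try (apply: in_dw; exact: ininit); last exact: R_dw.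
    by rewrite rev_cons dw_rcons.
  - split.
    + have [Hm [Rm Hmc]] := Rinit; have [HM HMc] := M_char.
      apply: f_eq => // u Hu Ru; rewrite Hmc // HMc //.
    + move=> x _; exact: iff_refl.
have gf : forall x, jin (jop Rr) x -> gmap (f x) = x.
  move=> x [Hx Rx]; have [[_ Rg] E] := @g_spec (f x) (ex_intro _ x (conj Hx erefl)).
  exact: f_inj.
have fg : forall y, jin (jsimplify (jop A)) y -> f (gmap y) = y.
  move=> y Hy; exact: (proj2 (g_spec Hy)).
have gin : forall y, jin (jsimplify (jop A)) y -> jin (jop Rr) (gmap y).
  move=> y Hy; exact: (proj1 (g_spec Hy)).
split.
  exists f, gmap; split => //.
  apply: (@morph_inv _ (jop Rr) (jsimplify (jop A)) f gmap fm gin gf fg).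
  - have [HT [RT _]] := Rtop; by split.
  - move=> x y [Hx _] [Hy _]; have [Hm [Rm _]] := Rmeet Hx Hy; by split.
  - move=> a x [Hx _]; have [Hd [Rd _]] := Rds a Hx; by split.
  - have [Hm [Rm _]] := Rinit; by split.
split.
- move=> Hreach s t Hs Ht E; apply: f_inj; try exact: Hreach.
  apply: functional_extensionality => w; apply: propositional_extensionality; exact: E.
- move=> Hsimp s Hs; have [r [Hr [Rr' Hrs]]] := below_R Hs.
  have -> : s = r.
    apply: Hsimp => // w; rewrite (f_eq Hs Hr) //.
    by move=> u Hu Ru; rewrite Hrs.
  exact: Rr'.
Qed.

End Main.

Theorem lemma3p8 (Sigma : finType) (A : jdfa Sigma) :
  is_jdfa A ->
  [/\ (forall s, jin A s -> forall w : seq Sigma,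
          jlang (jop A) s w <-> ~ jle A (jdw A (rev w) (jinit A)) s),
      (forall L : seq Sigma -> Prop, (forall w, jaccepts A w <-> L w) ->
          forall w, jaccepts (jop A) w <-> exists2 v, L v & w = rev v) &
      (jiso (jop (jreach A)) (jsimplify (jop A)) /\
       (jreachable A <-> jsimple (jop A)))].
Proof.
move=> HA; split.
- move=> s Hs w; exact: Lchar.
- move=> L HL w; have [HM HMc] := M_char HA.
  rewrite /jaccepts Lchar // HMc; last by apply: in_dw; [| exact: ininit].
  split => [H|[v Hv ->]].
  + exists (rev w); last by rewrite revK.
    apply/HL; exact: NNPP.
  + rewrite revK => H; apply: H; exact/HL.
- exact: part3.
Qed.
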